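(* Let $S=\{(6,5),(0,1),(1,1),(3,3)\}$ with $c_{(3,3)}=2$ and $c_{(6,5)}=c_{(0,1)}=c_{(1,1)}=1$. Then for every $n\ge0$, $$\Delta_n=\frac{N_{S,C}(n,n)-1}{2^{n+1}}.$$ In particular $\Delta_n>0$ for all $n\ge3$.
   Context: A fair coin is flipped $n$ times, producing a sequence $x_1,\dots,x_n\in\{H,T\}$ of independent uniformly random outcomes. Alice's score is the number of indices $i\in\{1,\dots,n-1\}$ with $(x_i,x_{i+1})=(H,H)$; Bob's score is the number of indices $i\in\{1,\dots,n-1\}$ with $(x_i,x_{i+1})=(H,T)$. $\Delta_n$ is the probability that Bob's score strictly exceeds Alice's minus the probability that Alice's score strictly exceeds Bob's. Given finite $S\subset\mathbb Z_{\ge0}^2\setminus\{(0,0)\}$ and positive integers $C=\{c_s\}_{s\in S}$, a colored lattice path is a finite (possibly empty) sequence $((s_1,x_1),\dots,(s_m,x_m))$ with $s_i\in S$ and $x_i\in\{1,\dots,c_{s_i}\}$; its endpoint is $\sum_i s_i$. $N_{S,C}(a,b)$ denotes the number of colored lattice paths with endpoint $(a,b)$. *)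

(* Defs.v *)
From mathcomp Require Import all_boot all_order all_algebra.
Set Implicit Arguments. Unset Strict Implicit. Unset Printing Implicit Defensive.
Import Order.TTheory GRing.Theory Num.Theory.

(* true = H, false = T.  A sequence x_1..x_n is an n.-tuple bool, indexed from 0. *)
Definition alice_score (x : seq bool) : nat :=
  count (fun i => nth false x i && nth false x i.+1) (iota 0 (size x).-1).
Definition bob_score (x : seq bool) : nat :=
  count (fun i => nth false x i && ~~ nth false x i.+1) (iota 0 (size x).-1).

Definition Delta (n : nat) : rat :=
  ((#|[pred x : n.-tuple bool | (alice_score x < bob_score x)%N]|%:R
    - #|[pred x : n.-tuple bool | (bob_score x < alice_score x)%N]|%:R)
   / (2 ^+ n))%R.

(* S is given as a duplicate-free list of steps; c s is the number of colors of s.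
   A colored step is a pair (s, x) with s \in S and 1 <= x <= c s. *)
Definition colored_steps (S : seq (nat * nat)) (c : nat * nat -> nat)
  : seq ((nat * nat) * nat) :=
  [seq (s, x) | s <- S, x <- iota 1 (c s)].

Fixpoint words (T : Type) (L : seq T) (k : nat) : seq (seq T) :=
  if k is k'.+1 then [seq y :: w | y <- L, w <- words L k'] else [:: [::]].

Definition endpoint (p : seq ((nat * nat) * nat)) : nat * nat :=
  (\sum_(st <- p) st.1.1, \sum_(st <- p) st.1.2)%N.

(* Since (0,0) \notin S, every step increases a+b by at least 1,
   so every colored path with endpoint (a,b) has length <= a+b; hence counting
   paths of length <= a+b counts all of them. *)
Definition Npaths (S : seq (nat * nat)) (c : nat * nat -> nat) (a b : nat) : nat :=
  (\sum_(k < (a + b).+1)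
     count (fun p => endpoint p == (a, b)) (words (colored_steps S c) k))%N.

Definition S13 : seq (nat * nat) := [:: (6, 5); (0, 1); (1, 1); (3, 3)].
Definition c13 (s : nat * nat) : nat := if s == (3, 3) then 2 else 1.

(* Main.v *)
Require Import Defs.
From mathcomp Require Import all_boot all_order all_algebra.
From mathcomp Require Import zify ring lra.
Import Order.TTheory GRing.Theory Num.Theory.

Fixpoint ext (l : seq (seq bool)) : seq (seq bool) :=
  if l is s :: l' then rcons s true :: rcons s false :: ext l' else [::].
Fixpoint allseq n := if n is m.+1 then ext (allseq m) else [:: [::]].

Lemma count_ext (P : pred (seq bool)) l :
  count P (ext l) = count (fun x => P (rcons x true)) l + count (fun x => P (rcons x false)) l.
Proof. elim: l => //= s l ->; lia. Qed.

Lemma mem_ext s (b : bool) l : (rcons s b \in ext l) = (s \in l).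
Proof.
elim: l => [|s' l IH] //=; rewrite !inE IH !eqseq_rcons; clear IH.
by case: b; case: (s == s') => //=; rewrite ?orbT ?orbF.
Qed.

Lemma nil_ext l : ([::] \in ext l) = false.
Proof. elim: l => [|s l IH] //=; rewrite !inE IH; by case: s. Qed.

Lemma uniq_ext l : uniq l -> uniq (ext l).
Proof.
elim: l => //= s l IH /andP [sl ul].
rewrite !inE eqseq_rcons /= andbF !mem_ext sl IH //.
Qed.

Lemma allseq_uniq n : uniq (allseq n).
Proof. elim: n => //= n IH; exact: uniq_ext. Qed.

Lemma mem_allseq n x : (x \in allseq n) = (size x == n).
Proof.
elim: n x => [|n IH] x; first by case: x.
case/lastP: x => [|s y] /=.
  by case: n {IH} => //= n; rewrite nil_ext.
rewrite mem_ext IH size_rcons eqSS //.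
Qed.

Lemma card_allseq n (P : pred (seq bool)) :
  #|[pred x : n.-tuple bool | P x]| = count P (allseq n).
Proof.
rewrite cardE -deprecated_filter_index_enum size_filter.
have -> : count [pred x : n.-tuple bool | P x] (index_enum (n.-tuple bool))
   = count P (map val (index_enum (n.-tuple bool))) by rewrite count_map.
move: P; apply/permP; apply: uniq_perm.
- rewrite map_inj_uniq; [exact: index_enum_uniq | exact: val_inj].
- exact: allseq_uniq.
move=> x; rewrite mem_allseq; apply/mapP/idP.
  by case=> t _ ->; rewrite size_tuple.
move=> /eqP H; exists (Tuple (introT eqP H)) => //; by rewrite mem_index_enum.
Qed.

Definition lst (x : seq bool) := last false x.

Lemma score_rcons_gen (f : bool -> bool -> bool) x y :
  count (fun i => f (nth false (rcons x y) i) (nth false (rcons x y) i.+1)) (iota 0 (size (rcons x y)).-1)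
  = count (fun i => f (nth false x i) (nth false x i.+1)) (iota 0 (size x).-1)
    + (if x is [::] then false else f (lst x) y).
Proof.
case Hx: x => [|b x']; first by [].
rewrite -Hx size_rcons -pred_Sn.
have [m Hm] : exists m, size x = m.+1 by rewrite Hx; eexists.
rewrite Hm -pred_Sn -addn1 iotaD count_cat /= add0n addn0; congr (_ + _).
  apply: eq_in_count => i; rewrite mem_iota add0n => /andP [_ Hi].
  by rewrite !nth_rcons Hm !ltnS (ltnW Hi) Hi.
rewrite !nth_rcons Hm ltnS leqnn ltnn eqxx /lst.
have -> : m = (size x).-1 by rewrite Hm.
by rewrite nth_last.
Qed.

Lemma alice_rcons x y : alice_score (rcons x y) = alice_score x + (lst x && y).
Proof. rewrite /alice_score score_rcons_gen; by case: x. Qed.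
Lemma bob_rcons x y : bob_score (rcons x y) = bob_score x + (lst x && ~~ y).
Proof. rewrite /bob_score (score_rcons_gen (fun a b => a && ~~ b)); by case: x. Qed.
Lemma lst_rcons x y : lst (rcons x y) = y.
Proof. by rewrite /lst last_rcons. Qed.

Lemma count_if {T} (c f g : pred T) l :
  count (fun x => if c x then f x else g x) l = count (fun x => c x && f x) l + count (fun x => ~~ c x && g x) l.
Proof. elim: l => //= x l ->; case: (c x) => /=; lia. Qed.

Definition Jc n (s : bool) p q :=
  count (fun x => (lst x == s) && (bob_score x == p) && (alice_score x == q)) (allseq n).

Lemma Jc_true_rec n p q :
  Jc n.+1 true p q = Jc n false p q + (if q is q'.+1 then Jc n true p q' else 0).
Proof.
rewrite /Jc /= count_ext.
rewrite [X in _ + X](eq_count (a2 := pred0)); last by move=> x; rewrite lst_rcons.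
rewrite count_pred0 addn0.
rewrite (eq_count (a2 := fun x => if lst x then (bob_score x == p) && (alice_score x + 1 == q)
          else (bob_score x == p) && (alice_score x == q))); last first.
  by move=> x; rewrite lst_rcons alice_rcons bob_rcons; case: (lst x); rewrite /= ?addn0 ?addn1.
rewrite count_if addnC; congr (_ + _).
  by apply: eq_count => x; case: (lst x); rewrite /= ?andbA.
case: q => [|q].
  rewrite (eq_count (a2 := pred0)) ?count_pred0 // => x.
  by rewrite addn1 /= !andbF.
by apply: eq_count => x; rewrite addn1 eqSS; case: (lst x); rewrite /= ?andbA.
Qed.

Lemma Jc_false_rec n p q :
  Jc n.+1 false p q = Jc n false p q + (if p is p'.+1 then Jc n true p' q else 0).
Proof.
rewrite /Jc /= count_ext.
rewrite [X in X + _](eq_count (a2 := pred0)); last by move=> x; rewrite lst_rcons.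
rewrite count_pred0 add0n.
rewrite (eq_count (a2 := fun x => if lst x then (bob_score x + 1 == p) && (alice_score x == q)
          else (bob_score x == p) && (alice_score x == q))); last first.
  by move=> x; rewrite lst_rcons alice_rcons bob_rcons; case: (lst x); rewrite /= ?addn0 ?addn1.
rewrite count_if addnC; congr (_ + _).
  by apply: eq_count => x; case: (lst x); rewrite /= ?andbA.
case: p => [|p].
  rewrite (eq_count (a2 := pred0)) ?count_pred0 // => x.
  by rewrite addn1 /= !andbF.
by apply: eq_count => x; rewrite addn1 eqSS; case: (lst x); rewrite /= ?andbA.
Qed.

Definition bF n p q := if p + q < n then 'C(p + q, p) * 'C(n.-1 - p - q, p) else 0.
Definition aF n p q :=
  if p is p'.+1 then (if p + q <= n then 'C(p' + q, p') * 'C(n - p - q, p) else 0)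
  else (q == 0 : nat).

Lemma bF_rec n p q : bF n.+1 p q = aF n p q + (if q is q'.+1 then bF n p q' else 0).
Proof.
rewrite /bF /aF /=.
case: q => [|q]; case: p => [|p]; rewrite ?addn0 ?add0n ?subn0 ?ltnS.
- by rewrite !bin0.
- by rewrite !binn; case: ifP.
- by rewrite !bin0 /=; case: ifP.
case: (leqP (p.+1 + q.+1) n) => H; last first.
  by have -> : (p.+1 + q < n) = false by apply/negbTE; rewrite -leqNgt; lia.
have H2 : p.+1 + q < n by lia.
rewrite H2.
have -> : n.-1 - p.+1 - q = n - p.+1 - q.+1 by lia.
have -> : p.+1 + q.+1 = (p.+1 + q).+1 by lia.
rewrite binS mulnDl addnC; congr (_ + _).
by rewrite addSnnS.
Qed.

Lemma aF_rec n p q : aF n.+1 p q = aF n p q + (if p is p'.+1 then bF n p' q else 0).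
Proof.
rewrite /bF /aF.
case: p => [|p]; first by rewrite addn0.
case: (ltngtP (p + q) n) => H.
- have -> : p.+1 + q <= n.+1 by lia.
  have -> : n.+1 - p.+1 - q = (n - p.+1 - q).+1 by lia.
  have -> : n.-1 - p - q = n - p.+1 - q by lia.
  by rewrite binS mulnDr.
- have -> : (p.+1 + q <= n.+1) = false by (apply/negbTE; lia).
  by [].
- have -> : p.+1 + q <= n.+1 by lia.
  have -> : n.+1 - p.+1 - q = 0 by lia.
  by rewrite bin0n muln0.
Qed.

Lemma Jc_formula n : (forall p q, Jc n true p q = bF n p q) /\ (forall p q, Jc n false p q = aF n p q).
Proof.
elim: n => [|n [IHt IHf]].
  split=> p q; rewrite /Jc /=.
    by rewrite /bF.
  by rewrite /aF; case: p => [|p] //=; rewrite eq_sym; case: (q == 0).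
split=> p q.
  by rewrite Jc_true_rec bF_rec IHf; case: q => [|q] //; rewrite IHt.
by rewrite Jc_false_rec aF_rec IHf; case: p => [|p] //; rewrite IHt.
Qed.

Local Notation "n %:Z" := (Posz n) (only parsing).

Ltac bsplit := repeat match goal with
 | |- context [ ((?x < ?y)%N : bool) ] => case: (boolP (x < y)%N) => ?
 | |- context [ ((?x == ?y)%N : bool) ] => case: (boolP (x == y)%N) => ?
 end.

Lemma key_sgn (a b : nat) :
  ((((a.+1 < b)%N)%:Z - ((b < a.+1)%N)%:Z) + (((a < b.+1)%N)%:Z - ((b.+1 < a)%N)%:Z)
  = 2 * (((a < b)%N)%:Z - ((b < a)%N)%:Z) - ((b == a.+1)%N)%:Z + ((a == b.+1)%N)%:Z)%R.
Proof. bsplit; simpl; lia. Qed.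

Lemma sum_ext (f : seq bool -> int) l :
  (\sum_(x <- ext l) f x = \sum_(x <- l) (f (rcons x true) + f (rcons x false)))%R.
Proof. elim: l => [|s l IH] /=; first by rewrite !big_nil. by rewrite !big_cons IH GRing.addrA. Qed.

Lemma count_sumZ {T} (P : pred T) l : ((count P l)%:Z = \sum_(x <- l) (P x : nat)%:Z)%R.
Proof. elim: l => [|s l IH] /=; first by rewrite big_nil. by rewrite big_cons -IH PoszD. Qed.

Definition gs (x : seq bool) : int :=
  ((alice_score x < bob_score x : nat)%:Z - (bob_score x < alice_score x : nat)%:Z)%R.
Definition Phi n : int := (\sum_(x <- allseq n) gs x)%R.
Definition B1 n := count (fun x => lst x && (bob_score x == (alice_score x).+1)) (allseq n).
Definition Bm n := count (fun x => lst x && (alice_score x == (bob_score x).+1)) (allseq n).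
Definition B0 n := count (fun x => lst x && (bob_score x == alice_score x)) (allseq n).
Definition A0 n := count (fun x => ~~ lst x && (bob_score x == alice_score x)) (allseq n).

Lemma Phi_rec n : Phi n.+1 = (2 * Phi n - (B1 n)%:Z + (Bm n)%:Z)%R.
Proof.
rewrite /Phi /B1 /Bm /= sum_ext !count_sumZ GRing.mulr_sumr -!GRing.sumrB -big_split /=.
apply: eq_bigr => x _.
rewrite /gs !alice_rcons !bob_rcons.
case: (lst x) => /=; last first.
  rewrite !addn0; lia.
rewrite !addn0 !addn1; exact: key_sgn.
Qed.

Lemma A0_rec n : A0 n.+1 = A0 n + Bm n.
Proof.
rewrite /A0 /Bm /= count_ext.
rewrite [X in X + _](eq_count (a2 := pred0)); last by move=> x; rewrite lst_rcons.
rewrite count_pred0 add0n.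
rewrite (eq_count (a2 := fun x => if lst x then (alice_score x == (bob_score x).+1)
          else (bob_score x == alice_score x))); last first.
  move=> x; rewrite lst_rcons alice_rcons bob_rcons; case: (lst x); rewrite /= ?addn0 ?addn1 //.
by rewrite count_if addnC.
Qed.

Lemma B0_rec n : B0 n.+1 = A0 n + B1 n.
Proof.
rewrite /A0 /B0 /B1 /= count_ext.
rewrite [X in _ + X](eq_count (a2 := pred0)); last by move=> x; rewrite lst_rcons.
rewrite count_pred0 addn0.
rewrite (eq_count (a2 := fun x => if lst x then (bob_score x == (alice_score x).+1)
          else (bob_score x == alice_score x))); last first.
  by move=> x; rewrite lst_rcons alice_rcons bob_rcons; case: (lst x); rewrite /= ?addn0 ?addn1.
by rewrite count_if addnC.
Qed.

Lemma count_part {T : eqType} (P : pred T) (f : T -> nat) (l : seq T) K :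
  (forall x, x \in l -> f x < K) -> count P l = \sum_(i < K) count (fun x => P x && (f x == i)) l.
Proof.
elim: l => [|y l IH] H /=; first by rewrite big1.
rewrite big_split /= -IH; last by move=> x Hx; apply: H; rewrite inE Hx orbT.
congr (_ + _).
have Hy : f y < K by apply: H; rewrite inE eqxx.
rewrite (bigD1 (Ordinal Hy)) //= eqxx andbT big1 ?addn0 // => i Hi.
have : f y != i by apply: contra Hi => /eqP Hfi; apply/eqP; apply: val_inj => /=.
by move=> /negbTE ->; rewrite andbF.
Qed.

Lemma score_le x : (alice_score x <= size x) && (bob_score x <= size x).
Proof.
rewrite /alice_score /bob_score.
by rewrite !(leq_trans (count_size _ _)) // size_iota leq_pred.
Qed.

Lemma allseq_size n x : x \in allseq n -> size x = n.
Proof. by rewrite mem_allseq => /eqP. Qed.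

Lemma B1_sum n K : n < K -> B1 n = \sum_(q < K) bF n q.+1 q.
Proof.
move=> HK; rewrite /B1 (@count_part _ _ alice_score _ K); last first.
  move=> x /allseq_size Hx; move: (score_le x); rewrite Hx => /andP [H1 _]; exact: leq_ltn_trans H1 HK.
apply: eq_bigr => q _; rewrite -(proj1 (Jc_formula n)) /Jc.
apply: eq_count => x; case: (lst x) => //=.
by case: (eqVneq (alice_score x) q) => [->|Hne]; rewrite ?eqxx ?andbT ?(negbTE Hne) ?andbF.
Qed.

Lemma Bm_sum n K : n < K -> Bm n = \sum_(q < K) bF n q q.+1.
Proof.
move=> HK; rewrite /Bm (@count_part _ _ bob_score _ K); last first.
  move=> x /allseq_size Hx; move: (score_le x); rewrite Hx => /andP [_ H1]; exact: leq_ltn_trans H1 HK.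
apply: eq_bigr => q _; rewrite -(proj1 (Jc_formula n)) /Jc.
apply: eq_count => x; case: (lst x) => //=.
by case: (eqVneq (bob_score x) q) => [->|Hne]; rewrite ?eqxx ?andbT ?(negbTE Hne) ?andbF.
Qed.

Lemma B0_sum n K : n < K -> B0 n = \sum_(q < K) bF n q q.
Proof.
move=> HK; rewrite /B0 (@count_part _ _ alice_score _ K); last first.
  move=> x /allseq_size Hx; move: (score_le x); rewrite Hx => /andP [H1 _]; exact: leq_ltn_trans H1 HK.
apply: eq_bigr => q _; rewrite -(proj1 (Jc_formula n)) /Jc.
apply: eq_count => x; case: (lst x) => //=.
by case: (eqVneq (alice_score x) q) => [->|Hne]; rewrite ?eqxx ?andbT ?(negbTE Hne) ?andbF.
Qed.

Lemma bF_sym n q : bF n.+1 q.+1 q = bF n q.+1 q + bF n q q.+1.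
Proof.
rewrite /bF.
have E : 'C(q.+1 + q, q.+1) = 'C(q + q.+1, q).
  rewrite addSnnS -{1}(@bin_sub (q + q.+1) q); last by lia.
  by congr 'C(_, _); lia.
case: (ltngtP (q.+1 + q) n) => H.
- have -> : q.+1 + q < n.+1 by lia.
  have -> : q + q.+1 < n by lia.
  rewrite -E -mulnDr; congr (_ * _).
  have -> : n.+1.-1 - q.+1 - q = (n.-1 - q.+1 - q).+1 by lia.
  have -> : n.-1 - q - q.+1 = n.-1 - q.+1 - q by lia.
  by rewrite binS.
- have -> : (q.+1 + q < n.+1) = false by (apply/negbTE; lia).
  by have -> : (q + q.+1 < n) = false by (apply/negbTE; lia).
- have -> : q.+1 + q < n.+1 by lia.
  have -> : (q + q.+1 < n) = false by (apply/negbTE; lia).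
  have -> : n.+1.-1 - q.+1 - q = 0 by lia.
  by rewrite bin0n muln0.
Qed.

Lemma B_sym n : B1 n.+1 = B1 n + Bm n.
Proof.
rewrite (@B1_sum n.+1 n.+2) // (@B1_sum n n.+2) ?(@Bm_sum n n.+2) //.
rewrite -big_split; apply: eq_bigr => q _; exact: bF_sym.
Qed.

Lemma Phi_B1 n : Phi n = (B1 n)%:Z.
Proof.
elim: n => [|n IH]; first by rewrite /Phi /B1 /= big_cons big_nil /gs.
rewrite Phi_rec IH B_sym PoszD; lia.
Qed.

Lemma A0_B1 n : A0 n = (B1 n).+1.
Proof.
elim: n => [|n IH]; first by [].
by rewrite A0_rec B_sym IH.
Qed.

Lemma B0_Phi n : (B0 n.+1)%:Z = (2 * Phi n + 1)%R.
Proof. rewrite B0_rec A0_B1 Phi_B1; lia. Qed.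

Local Notation PP := {poly {poly int}}.
Definition xv : PP := ('X)%:P.
Definition yv : PP := 'X.
Definition cf (p : PP) (a b : nat) : int := (p`_b)`_a.

Lemma cf_mon p a b al be :
  cf (xv ^+ al * yv ^+ be * p) a b = if (al <= a) && (be <= b) then cf p (a - al) (b - be) else 0%R.
Proof.
rewrite /cf /xv /yv -rmorphXn -GRing.mulrA coefCM coefXnM coefXnM.
case: (ltnP b be) => Hb; rewrite ?coef0 ?andbF ?andbT; first by case: ifP.
by case: (ltnP a al).
Qed.

Lemma cf_D p q a b : cf (p + q) a b = (cf p a b + cf q a b)%R.
Proof. by rewrite /cf !coefD. Qed.

Lemma cf_sum I (r : seq I) (F : I -> PP) a b : cf (\sum_(i <- r) F i) a b = (\sum_(i <- r) cf (F i) a b)%R.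
Proof. by rewrite /cf !coef_sum. Qed.

Lemma cf_Mn p m a b : cf (p *+ m) a b = (cf p a b *+ m)%R.
Proof. by rewrite /cf !coefMn. Qed.

Lemma cf_1 a b : cf 1 a b = ((a == 0) && (b == 0) : nat)%:Z.
Proof. rewrite /cf coef1; case: b => [|b] /=; first by rewrite coef1; case: a.
by rewrite coef0 andbF.
Qed.

Definition stepP (L : seq ((nat * nat) * nat)) : PP := \sum_(st <- L) xv ^+ st.1.1 * yv ^+ st.1.2.

Lemma count_pairs (P : pred (seq ((nat*nat)*nat))) L W :
  count P [seq y :: w | y <- L, w <- W] = \sum_(y <- L) count (fun w => P (y :: w)) W.
Proof.
elim: L => [|y L IH]; first by rewrite big_nil.
by rewrite allpairs_cons count_cat count_map IH big_cons.
Qed.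

Lemma Posz_sum {I} (r : seq I) (f : I -> nat) : (\sum_(y <- r) f y)%:Z = (\sum_(y <- r) (f y)%:Z)%R.
Proof. elim: r => [|y r IH]; first by rewrite !big_nil. by rewrite !big_cons PoszD IH. Qed.

Lemma words_cf L k a b :
  (count (fun p => endpoint p == (a, b)) (words L k))%:Z = cf (stepP L ^+ k) a b.
Proof.
elim: k a b => [|k IH] a b.
  rewrite /= cf_1 /endpoint !big_nil /=.
  by rewrite xpair_eqE addn0 eq_sym [b == 0]eq_sym.
rewrite GRing.exprS /stepP GRing.mulr_suml cf_sum -/(stepP L) /= count_pairs.
rewrite Posz_sum; apply: eq_bigr => y _.
rewrite cf_mon -IH.
case: ifP => H.
  apply: congr1; apply: eq_count => w; rewrite /endpoint !big_cons !xpair_eqE.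
  case/andP: H => H1 H2.
  by rewrite -{1}(subnKC H1) -{1}(subnKC H2) !eqn_add2l.
rewrite (eq_count (a2 := pred0)) ?count_pred0 // => w.
rewrite /endpoint !big_cons !xpair_eqE /=.
apply/negbTE; apply: contraFN H => /andP [/eqP <- /eqP <-].
by rewrite !leq_addr.
Qed.

Lemma stepP13 : stepP (colored_steps S13 c13) = (xv * yv + yv * (1 + xv ^+ 3 * yv ^+ 2) ^+ 2)%R.
Proof.
have -> : colored_steps S13 c13 = [:: (6, 5, 1); (0, 1, 1); (1, 1, 1); (3, 3, 1); (3, 3, 2)] by [].
rewrite /stepP !big_cons big_nil /=; ring.
Qed.

Lemma mono_eq (k i j : nat) :
  ((xv * yv) ^+ (k - i) * (yv ^+ i * (xv ^+ 3 * yv ^+ 2) ^+ j)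
   = xv ^+ (k - i + 3 * j)%N * yv ^+ (k - i + i + 2 * j)%N * 1)%R.
Proof. rewrite !exprMn !exprD; ring. Qed.

Lemma cf_mono a b n : cf (xv ^+ a * yv ^+ b * 1) n n = ((a == n) && (b == n) : nat)%:Z.
Proof.
rewrite cf_mon cf_1.
case: (leqP a n) => Ha; case: (leqP b n) => Hb /=; rewrite ?subn_eq0.
- by rewrite !eqn_leq Ha Hb.
- by rewrite (gtn_eqF Hb) andbF.
- by rewrite (gtn_eqF Ha).
- by rewrite (gtn_eqF Ha).
Qed.

Lemma cf_pow13 k n :
  cf ((xv * yv + yv * (1 + xv ^+ 3 * yv ^+ 2) ^+ 2) ^+ k)%R n n
  = (\sum_(i < k.+1) \sum_(j < (i + i).+1)
       (('C(k, i) * 'C(i + i, j) * ((k - i + 3 * j == n) && (k - i + i + 2 * j == n)))%N)%:Z)%R.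
Proof.
rewrite exprDn cf_sum; apply: eq_bigr => i _.
have -> : ((yv * (1 + xv ^+ 3 * yv ^+ 2) ^+ 2) ^+ i = yv ^+ i * (xv ^+ 3 * yv ^+ 2 + 1) ^+ (i + i))%R.
  by rewrite exprMn -exprM mul2n -addnn addrC.
rewrite cf_Mn exprD1n mulr_sumr mulr_sumr cf_sum.
rewrite -mulr_natr mulr_suml; apply: eq_bigr => j _.
rewrite !mulrnAr cf_Mn mono_eq cf_mono.
rewrite mulr1 !pmulrn !mulrzz -!PoszM; congr Posz.
by ring.
Qed.

Lemma sum_widen (f : nat -> nat) a b : a <= b -> (forall i, a <= i -> i < b -> f i = 0) ->
  \sum_(i < b) f i = \sum_(i < a) f i.
Proof.
move=> Hab H0; rewrite (big_ord_widen _ _ Hab) [in RHS]big_mkcond /=.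
apply: eq_bigr => i _; case: ifP => // /negbT; rewrite -leqNgt => Hi.
exact: H0.
Qed.

Definition CS n := \sum_(i < n.+1) 'C(i + i, i) * 'C(n - (i + i), i).

Lemma count_words13 k n :
  count (fun p => endpoint p == (n, n)) (words (colored_steps S13 c13) k)
  = \sum_(i < k.+1) \sum_(j < (i + i).+1)
       ('C(k, i) * 'C(i + i, j) * ((k - i + 3 * j == n) && (k - i + i + 2 * j == n))).
Proof.
apply/eqP; rewrite -eqz_nat words_cf stepP13 cf_pow13 Posz_sum.
by apply/eqP; apply: eq_bigr => i _; rewrite Posz_sum.
Qed.

Lemma jsum k i n : i <= k ->
  \sum_(j < (i + i).+1) ('C(k, i) * 'C(i + i, j) * ((k - i + 3 * j == n) && (k - i + i + 2 * j == n)))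
  = 'C(k, i) * 'C(i + i, i) * (k + i + i == n).
Proof.
move=> Hik.
have Hi : i < (i + i).+1 by lia.
rewrite (bigD1 (Ordinal Hi)) //= big1 ?addn0.
  have -> : k - i + 3 * i = k + i + i by lia.
  have -> : k - i + i + 2 * i = k + i + i by lia.
  by rewrite andbb.
move=> j Hj.
have : (k - i + 3 * j == n) && (k - i + i + 2 * j == n) = false.
  apply/negbTE/negP => /andP [/eqP E1 /eqP E2].
  move: Hj => /eqP; apply; apply: val_inj => /=; lia.
by move=> ->; rewrite muln0.
Qed.

Lemma Npaths13 n : Npaths S13 c13 n n = CS n.
Proof.
rewrite /Npaths.
under eq_bigr => k _ do rewrite count_words13.
have E : forall k : 'I_(n + n).+1,
  \sum_(i < k.+1) \sum_(j < (i + i).+1)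
       ('C(k, i) * 'C(i + i, j) * ((k - i + 3 * j == n) && (k - i + i + 2 * j == n)))
  = \sum_(i < (n + n).+1) 'C(k, i) * 'C(i + i, i) * (k + i + i == n).
  move=> k.
  rewrite (@sum_widen (fun i => 'C(k, i) * 'C(i + i, i) * (k + i + i == n)) k.+1 (n + n).+1); last 2 first.
  - by case: k.
  - by move=> i Hi _; rewrite bin_small ?mul0n.
  by apply: eq_bigr => i _; rewrite jsum //; case: i => /= i; rewrite ltnS.
rewrite (eq_bigr _ (fun k _ => E k)) exchange_big /=.
rewrite /CS -(@sum_widen (fun i => 'C(i + i, i) * 'C(n - (i + i), i)) n.+1 (n + n).+1); last 2 first.
- lia.
- move=> i Hi _. have -> : n - (i + i) = 0 by lia. by rewrite bin0n; case: i Hi => //= i _; rewrite muln0.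
apply: eq_bigr => i _.
case: (leqP (i + i) n) => Hin.
  have Hk : n - (i + i) < (n + n).+1 by lia.
  rewrite (bigD1 (Ordinal Hk)) //= big1 ?addn0.
    have -> : n - (i + i) + i + i == n by apply/eqP; lia.
    by rewrite muln1 mulnC.
  move=> k Hk'; have -> : (k + i + i == n) = false.
    apply/negbTE/negP => /eqP E1; move: Hk' => /eqP; apply; apply: val_inj => /=; lia.
  by rewrite muln0.
rewrite big1.
  have -> : n - (i + i) = 0 by lia.
  by rewrite bin0n; case: (nat_of_ord i) Hin => //= j _; rewrite muln0.
move=> k _; have -> : (k + i + i == n) = false by apply/negbTE; lia.
by rewrite muln0.
Qed.


Lemma B0_CS n : B0 n.+1 = CS n.
Proof.
rewrite (@B0_sum n.+1 n.+2) // /CS.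
rewrite (@sum_widen (fun q => bF n.+1 q q) n.+1 n.+2) //; last first.
  by move=> i Hi _; rewrite /bF; have -> : (i + i < n.+1) = false by (apply/negbTE; lia).
apply: eq_bigr => i _; rewrite /bF -pred_Sn subnDA.
case: ifP => H //.
have -> : n - i - i = 0 by move/negbT: H; lia.
by rewrite bin0n; case: (nat_of_ord i) H => //= j _; rewrite muln0.
Qed.

Lemma Phi_counts n : Phi n = ((count (fun x => (alice_score x < bob_score x)%N) (allseq n))%:Z
                         - (count (fun x => (bob_score x < alice_score x)%N) (allseq n))%:Z)%R.
Proof. by rewrite /Phi !count_sumZ -GRing.sumrB. Qed.

Lemma CS_ge n : 3 <= n -> 3 <= CS n.
Proof.
move=> Hn; rewrite /CS.
case: n Hn => [|[|[|m]]] // _.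
rewrite big_ord_recl big_ord_recl /=.
rewrite addnA; apply: leq_trans (leq_addr _ _).
rewrite /bump /= !bin0 mul1n.
have -> : m.+3 - 2 = m.+1 by lia.
rewrite bin1 bin1; lia.
Qed.

Local Open Scope ring_scope.

Theorem mainTheorem13 :
  (forall n : nat,
     Delta n = ((Npaths S13 c13 n n)%:R - 1) / 2 ^+ n.+1 :> rat) /\
  (forall n : nat, (3 <= n)%N -> 0 < Delta n).
Proof.
have key : forall n : nat, Delta n = (Phi n)%:~R / 2 ^+ n :> rat.
  move=> n; rewrite /Delta.
  rewrite (card_allseq n (fun s => (alice_score s < bob_score s)%N)).
  rewrite (card_allseq n (fun s => (bob_score s < alice_score s)%N)).
  by rewrite Phi_counts intrB.
have hN : forall n : nat, (Npaths S13 c13 n n)%:R = 2 * (Phi n)%:~R + 1 :> rat.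
  move=> n; rewrite Npaths13 -B0_CS.
  have -> : (B0 n.+1)%:R = ((B0 n.+1)%:Z)%:~R :> rat by [].
  by rewrite B0_Phi intrD intrM.
split.
  move=> n; rewrite key hN exprS.
  have h2 : (2 : rat) ^+ n != 0 by rewrite expf_neq0.
  field; exact: h2.
move=> n Hn; rewrite key.
have HP : (0 < Phi n)%R.
  have := B0_Phi n; rewrite B0_CS => E.
  have := @CS_ge n Hn; move: E; lia.
apply: divr_gt0; first by rewrite ltr0z.
by rewrite exprn_gt0.
Qed.
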